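(* Every orientation of a chordal graph has at most one kernel.
   Context: A graph is chordal if it has no induced cycle of length $4$ or more. An orientation of a graph orients each edge in exactly one direction (not necessarily clique-acyclic). A kernel of a digraph $D=(V,A)$ is a set $S$ of pairwise non-adjacent vertices such that every $u\in V\setminus S$ has an arc $(u,v)\in A$ with $v\in S$. *)

(* Defs.v *)
From mathcomp Require Import all_boot.
Set Implicit Arguments. Unset Strict Implicit. Unset Printing Implicit Defensive.

Definition simple_graph (T : finType) (e : rel T) : Prop :=
  symmetric e /\ irreflexive e.

Definition induced_cycle (T : finType) (e : rel T) (c : seq T) : Prop :=
  uniq c /\
  forall x0 : T, forall i j, i < size c -> j < size c ->
    e (nth x0 c i) (nth x0 c j) =
      ((j == (i.+1 %% size c)) || (i == (j.+1 %% size c))).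

Definition chordal (T : finType) (e : rel T) : Prop :=
  forall c : seq T, 4 <= size c -> ~ induced_cycle e c.

Definition orientation (T : finType) (e : rel T) (a : rel T) : Prop :=
  forall x y : T, e x y = (a x y || a y x) /\ ~~ (a x y && a y x).

Definition kernel (T : finType) (a : rel T) (S : {set T}) : Prop :=
  (forall x y, x \in S -> y \in S -> ~~ a x y) /\
  (forall u, u \notin S -> exists2 v, v \in S & a u v).

(* Main.v *)
Require Import Defs.
From mathcomp Require Import all_boot.
From mathcomp Require Import zify.
From Stdlib Require Import Classical.
Set Implicit Arguments. Unset Strict Implicit.

Definition cadj (T : finType) (e : rel T) (c : seq T) : Prop :=
  forall x0 k, k < size c -> e (nth x0 c k) (nth x0 c (k.+1 %% size c)).

Lemma chord_reduce (T : finType) (e : rel T) (D : {set T}) :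
  symmetric e -> irreflexive e ->
  forall n (c : seq T), size c = n -> uniq c -> 3 <= size c -> {subset c <= D} -> cadj e c ->
  exists c', [/\ 3 <= size c', {subset c' <= D} & induced_cycle e c'].
Proof.
move=> esym eirr; elim/ltn_ind => n IH c Hn Hu H3 HD Hc.
have [x0 _] : exists x0 : T, True by case: c H3 {Hn Hu HD Hc} => [|x ?] //; exists x.
case: (classic (exists i j, [/\ i < j, j < size c, e (nth x0 c i) (nth x0 c j) &
   ~~ ((j == i.+1 %% size c) || (i == j.+1 %% size c))])).
- move=> [i [j [Hij Hj He Hn']]].
  have Hj1 : j != i.+1.
    apply/negP => /eqP Ej; move: Hn'; rewrite modn_small ?Ej ?eqxx //; lia.
  have Hend : ~~ ((i == 0) && (j == (size c).-1)).
    apply/negP => /andP[/eqP Ei /eqP Ej]; move: Hn'.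
    have -> : j.+1 = size c by lia.
    by rewrite modnn Ei eqxx orbT.
  set c' := drop i (take j.+1 c).
  have Hs : size c' = j.+1 - i by rewrite size_drop size_takel.
  have Hnth : forall x k, k < j.+1 - i -> nth x c' k = nth x c (i + k).
    by move=> x k Hk; rewrite nth_drop nth_take //; lia.
  apply: (IH (j.+1 - i) _ c') => //.
  + lia.
  + by rewrite drop_uniq // take_uniq.
  + lia.
  + by move=> x /mem_drop /mem_take /HD.
  + move=> x k; rewrite Hs => Hk; rewrite Hnth //.
    case: (ltnP k.+1 (j.+1 - i)) => Hk1.
    * rewrite modn_small // Hnth //.
      have Hik : i + k < size c by lia.
      have := Hc x (i + k) Hik.
      rewrite (modn_small (m := (i + k).+1)) ?addnS //.
      lia.
    * have -> : k.+1 = j.+1 - i by lia.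
      rewrite modnn Hnth ?addn0; last lia.
      have -> : i + k = j by lia.
      have Hi2 : i < size c by lia.
      rewrite (set_nth_default x0 x Hi2) (set_nth_default x0 x Hj). by rewrite (esym (nth x0 c j)).
- move=> Hno; exists c; split => //; split => // x1 i j Hi Hj.
  rewrite !(set_nth_default x0) //; apply/idP/idP.
  + move=> He; apply/negPn/negP => Hn'.
    case: (ltngtP i j) => Hij.
    * by apply: Hno; exists i, j; split.
    * apply: Hno; exists j, i; split => //; first by rewrite esym.
      by rewrite orbC.
    * by move: He; rewrite Hij eirr.
  + case/orP => /eqP ->.
    * exact: Hc.
    * by rewrite esym; apply: Hc.
Qed.

Theorem proposition3 (T : finType) (e a : rel T) :
  simple_graph e -> chordal e -> orientation e a ->
  forall S1 S2 : {set T}, kernel a S1 -> kernel a S2 -> S1 = S2.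
Proof.
move=> [es eirr] Hch Hor S1 S2 [I1 A1] [I2 A2].
set D := (S1 :\: S2) :|: (S2 :\: S1).
have noarc1 : forall x y, x \in S1 -> y \in S1 -> ~~ e x y.
  by move=> x y Hx Hy; rewrite (Hor x y).1 negb_or I1 ?I1.
have noarc2 : forall x y, x \in S2 -> y \in S2 -> ~~ e x y.
  by move=> x y Hx Hy; rewrite (Hor x y).1 negb_or I2 ?I2.
have step : forall x, x \in D -> exists2 y, y \in D & a x y.
  move=> x; rewrite !inE => /orP[/andP[H2 H1]|/andP[H1 H2]].
  - have [y Hy Ha] := A2 x H2; exists y => //.
    have Hy1 : y \notin S1 by apply/negP => Hy1; move: (I1 x y H1 Hy1); rewrite Ha.
    by rewrite !inE Hy Hy1 ?orbT.
  - have [y Hy Ha] := A1 x H1; exists y => //.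
    have Hy2 : y \notin S2 by apply/negP => Hy2; move: (I2 x y H2 Hy2); rewrite Ha.
    by rewrite !inE Hy Hy2 ?orbT.
have sides : forall x y, x \in D -> y \in D -> e x y -> (x \in S1) != (y \in S1).
  move=> x y; rewrite !inE.
  case Hx1: (x \in S1); case Hy1: (y \in S1); rewrite ?andbF ?andbT /= => Hx Hy Hxy //.
  - by move: (noarc1 x y Hx1 Hy1); rewrite Hxy.
  - by move: (noarc2 x y Hx Hy); rewrite Hxy.
case: (set_0Vmem D) => [D0|[x0 Hx0]].
  apply/setP => x; have : x \notin D by rewrite D0 inE.
  by rewrite !inE; case: (x \in S1); case: (x \in S2).
pose f x := odflt x [pick y in D | a x y].
have Hf : forall x, x \in D -> f x \in D /\ a x (f x).
  move=> x Hx; rewrite /f; case: pickP => [y /andP[]|H] //=.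
  have [y Hy Ha] := step x Hx.
  by move: (H y); rewrite Hy Ha.
pose s k := iter k f x0.
have sD : forall k, s k \in D by elim => [|k IH] //=; case: (Hf _ IH).
have sa : forall k, a (s k) (s k.+1) by move=> k; case: (Hf _ (sD k)).
have ex : forall j i, i < j -> s i = s j ->
  exists c, [/\ uniq c, 3 <= size c, {subset c <= D} & cadj e c].
  elim/ltn_ind => j IH i Hij Hs.
  set c := map s (iota i (j - i)).
  have nthc : forall x k, k < j - i -> nth x c k = s (i + k).
    by move=> x k Hk; rewrite (nth_map 0) ?size_iota // nth_iota.
  case Hu: (uniq c).
  - exists c; split => //.
    + rewrite size_map size_iota.
      case E: (j - i) => [|[|[|m]]] //; first lia.
      * have Ej : j = i.+1 by lia.
        move: (sa i) Hs; rewrite Ej => Ha Hs'.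
        move: (eirr (s i)); rewrite (Hor _ _).1 {2}Hs' Ha //.
      * have Ej : j = i.+2 by lia.
        move: (sa i) (sa i.+1) Hs; rewrite Ej => Ha Hb Hs'.
        move: (Hor (s i) (s i.+1)).2; rewrite Ha Hs' Hb //.
    + by move=> x /mapP [k _ ->]; apply: sD.
    + move=> x k; rewrite size_map size_iota => Hk.
      rewrite nthc //.
      have -> : nth x c (k.+1 %% (j - i)) = s (i + k).+1.
        case: (ltnP k.+1 (j - i)) => H.
        * by rewrite modn_small // nthc // addnS.
        * have Ek : k.+1 = j - i by lia.
          rewrite Ek modnn nthc ?addn0 ?Hs; last lia.
          congr (s _); lia.
      by rewrite (Hor _ _).1 sa.
  - move/negbT: Hu => /(uniqPn x0) [k [l [Hkl Hl Heq]]].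
    move: Hl Heq; rewrite size_map size_iota => Hl.
    rewrite !nthc //; last lia => Heq.
    by apply: (IH (i + l) _ (i + k)) => //; lia.
have [k [l [Hkl Hl Heq]]] : exists k l,
    [/\ k < l, l < size (map s (iota 0 #|T|.+1)) &
     nth x0 (map s (iota 0 #|T|.+1)) k = nth x0 (map s (iota 0 #|T|.+1)) l].
  apply/(uniqPn x0)/negP => U.
  have := uniq_leq_size U (fun x _ => mem_enum T x).
  by rewrite size_map size_iota -cardE ltnn.
move: Hl Heq; rewrite size_map size_iota => Hl.
rewrite !(nth_map 0) ?size_iota ?nth_iota //; last lia.
rewrite !add0n => Heq.
have [c [Uc Sc Dc Ac]] := ex l k Hkl Heq.
have [c' [S' D' I']] := chord_reduce es eirr (erefl (size c)) Uc Sc Dc Ac.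
case: (ltngtP (size c') 3) => H3.
- lia.
- by exfalso; apply: (Hch c' H3).
- move: c' H3 D' I' {S'} => [|u [|v [|w [|? ?]]]] // _ D' [_ I'].
  have Euv := I' u 0 1 erefl erefl.
  have Evw := I' u 1 2 erefl erefl.
  have Ewu := I' u 2 0 erefl erefl.
  move: Euv Evw Ewu => /= Euv Evw Ewu.
  have Du : u \in D by apply: D'; rewrite !inE eqxx.
  have Dv : v \in D by apply: D'; rewrite !inE eqxx ?orbT.
  have Dw : w \in D by apply: D'; rewrite !inE eqxx ?orbT.
  move: (sides u v Du Dv Euv) (sides v w Dv Dw Evw) (sides w u Dw Du Ewu).
  by case: (u \in S1); case: (v \in S1); case: (w \in S1).
lia.
Qed.
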